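(* For $m,l,r\in\mathbb{N}$ with $l,r\le m$, \[ [m-l]_q^![m-r]_q^!\,x^{-l}\Delta^{(-m)}(-t)y^{-r}=[l]_q^![r]_q^!\,t^{l+r-m}\,y^{l-m}\widetilde\Delta^{(-m)}(-t)x^{r-m} \] as formal Laurent series in $t$ with coefficients in $\mathbb{V}$.
   Context: $\mathbb{F}$ is a field of characteristic zero, $q\in\mathbb{F}$ nonzero and not a root of unity. $[n]_q=\frac{q^n-q^{-n}}{q-q^{-1}}$, $[n]_q^!=[n]_q[n-1]_q\cdots[1]_q$, $[0]_q^!=1$. $\mathbb{V}$ is the free algebra over $\mathbb{F}$ on letters $x,y$, with basis the words ($\mathbf 1$ the empty word); $t$ is an indeterminate. Put $\bar x=1,\bar y=-1$. A word $a_1\cdots a_n$ is Catalan if $\bar a_1+\dots+\bar a_i\ge0$ for $1\le i\le n-1$ and $\bar a_1+\dots+\bar a_n=0$; $\mathrm{Cat}_n$ is the set of Catalan words of length $2n$. For $m\in\mathbb{Z},n\in\mathbb{N}$, $\Delta^{(m)}_n=\sum_{a_1\cdots a_{2n}\in\mathrm{Cat}_n}\prod_{i=1}^{2n}[\bar a_1+\dots+\bar a_{i-1}+m(\bar a_i+1)/2]_q\,a_1\cdots a_{2n}$ and $\Delta^{(m)}(t)=\sum_{n\in\mathbb{N}}\Delta^{(m)}_nt^n$. $\widetilde\Delta^{(m)}_n$ is obtained from $\Delta^{(m)}_n$ by interchanging the letters $x$ and $y$ in every word, and $\widetilde\Delta^{(m)}(t)=\sum_n\widetilde\Delta^{(m)}_nt^n$.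 Deletion: for a word $w=a_1\cdots a_n$ ($n\ge1$), $x^{-1}w=a_2\cdots a_n$ if $a_1=x$ and $0$ otherwise; $x^{-1}\mathbf 1=0$; similarly $y^{-1}w$ deletes a leading $y$, and $wx^{-1}$, $wy^{-1}$ delete a trailing $x$, resp. $y$ (otherwise $0$). These are extended linearly and coefficientwise to series; for $k\ge1$, $x^{-k}$ (resp. $y^{-k}$, etc.) is the $k$-fold application, and exponent $0$ means the identity. *)

(* Defs.v *)
From mathcomp Require Import all_boot all_order all_algebra.
Set Implicit Arguments. Unset Strict Implicit. Unset Printing Implicit Defensive.
Import Order.TTheory GRing.Theory Num.Theory.
Local Open Scope ring_scope.

Section Defs.
Variable F : fieldType.

Definition letx : bool := true.
Definition lety : bool := false.
Definition word := seq bool.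

(* An element of the free algebra V, given by its coefficient on each word
   (the elements considered here are all finitely supported). *)
Definition V := word -> F.

Definition bar (a : bool) : int := if a then 1%Z else (-1)%Z.

Definition psum (w : word) (i : nat) : int := \sum_(j < i) bar (nth false w j).

Definition catalanb (w : word) : bool :=
  [forall i : 'I_(size w), (1 <= i)%N ==> (0 <= psum w i)%R] && (psum w (size w) == 0).

Definition qint (q : F) (n : int) : F := (q ^ n - q ^ (- n)) / (q - q^-1).
Definition qfact (q : F) (n : nat) : F := \prod_(1 <= i < n.+1) qint q i%:Z.

(* Delta^{(m)}_n as coefficient function; (\bar a_i + 1)/2 is 1 if a_i = x, 0 if a_i = y *)
Definition Delta (q : F) (m : int) (n : nat) : V := fun w =>
  if (size w == 2 * n)%N && catalanb w then
    \prod_(i < size w)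
      qint q (psum w i + m * (((bar (nth false w i) + 1) %/ 2)%Z))
  else 0.

Definition Deltat (q : F) (m : int) (n : nat) : V := fun w => Delta q m n (map negb w).

(* Deletions (linear): the coefficient of w in x^{-1} v is the coefficient of x w in v, etc. *)
Definition delL (a : bool) (v : V) : V := fun w => v (a :: w).
Definition delR (a : bool) (v : V) : V := fun w => v (rcons w a).
Definition delLk (a : bool) (k : nat) (v : V) : V := iter k (delL a) v.
Definition delRk (a : bool) (k : nat) (v : V) : V := iter k (delR a) v.

Definition pser := nat -> V.
Definition lser := int -> V.

Definition ser_negt (s : pser) : pser := fun n w => (-1) ^+ n * s n w.
Definition ser_map (g : V -> V) (s : pser) : pser := fun n => g (s n).
Definition lser_of (s : pser) : lser := fun N =>
  match N with Posz n => s n | Negz _ => fun _ => 0 end.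
Definition lser_shift (k : int) (s : lser) : lser := fun N => s (N - k).
Definition lser_scale (c : F) (s : lser) : lser := fun N w => c * s N w.

Definition DeltaS (q : F) (m : int) : pser := fun n => Delta q m n.
Definition DeltatS (q : F) (m : int) : pser := fun n => Deltat q m n.

End Defs.

(* Main.v *)
Require Import Defs.
From mathcomp Require Import all_boot all_order all_algebra.
From mathcomp Require Import zify ring lra.
From Stdlib Require Import FunctionalExtensionality.
Import Order.TTheory GRing.Theory Num.Theory.
Local Open Scope ring_scope.

Section Aux.
Variable F : fieldType.
Variable q : F.

Fixpoint tot (w : word) : int := match w with [::] => 0 | a :: w' => bar a + tot w' end.

Fixpoint wt (m : int) (h : int) (w : word) : F :=
  match w with
  | [::] => 1
  | a :: w' => qint q (h + m * (((bar a + 1) %/ 2)%Z)) * wt m (h + bar a) w'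
  end.

Fixpoint good (h : int) (w : word) : bool :=
  match w with
  | [::] => h == 0
  | a :: w' => (0 <= h + bar a) && good (h + bar a) w'
  end.

Fixpoint inb (M : nat) (h : int) (w : word) : bool :=
  match w with
  | [::] => true
  | a :: w' => (0 <= h + bar a) && (h + bar a <= M%:Z) && inb M (h + bar a) w'
  end.

Lemma wt_cons m h a w : wt m h (a :: w) = qint q (h + m * (((bar a + 1) %/ 2)%Z)) * wt m (h + bar a) w.
Proof. by []. Qed.

Lemma stepE (m h : int) (a : bool) :
  qint q (h + m * (((bar a + 1) %/ 2)%Z)) = if a then qint q (h + m) else qint q h.
Proof.
case: a.
  by have -> : ((bar true + 1) %/ 2)%Z = 1 by []; rewrite mulr1.
by have -> : ((bar false + 1) %/ 2)%Z = 0 by []; rewrite mulr0 addr0.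
Qed.

Lemma qint_neg (n : int) : qint q (- n) = - qint q n.
Proof. by rewrite /qint opprK -mulNr opprB. Qed.

Lemma qint0 : qint q 0 = 0.
Proof. by rewrite /qint oppr0 subrr mul0r. Qed.

Lemma qfactS n : qfact q n.+1 = qfact q n * qint q n.+1%:Z.
Proof. by rewrite /qfact big_nat_recr. Qed.

Lemma psumS a w i : psum (a :: w) i.+1 = bar a + psum w i.
Proof. by rewrite /psum big_ord_recl. Qed.

Lemma psum0 w : psum w 0 = 0.
Proof. by rewrite /psum big_ord0. Qed.

Lemma prod_wt (m : int) w : forall h : int,
  \prod_(i < size w) qint q (h + psum w i + m * (((bar (nth false w i) + 1) %/ 2)%Z))
  = wt m h w.
Proof.
elim: w => [|a w IH] h /=; first by rewrite big_ord0.
rewrite big_ord_recl psum0 addr0 -IH; congr (_ * _).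
by apply: eq_bigr => i _; rewrite /bump /= psumS addrA.
Qed.

Lemma psum_tot w : psum w (size w) = tot w.
Proof. by elim: w => [|a w IH]; rewrite ?psum0 //= psumS IH. Qed.

Definition A (h : int) w := all (fun i => 0 <= h + psum w i) (iota 1 (size w)).

Lemma A_good w : forall h, A h w && (h + tot w == 0) = good h w.
Proof.
elim: w => [|a w IH] h /=; first by rewrite /A /= addr0.
rewrite /A /= -/(iota 1 (size w)).
rewrite (iotaDl 1 1) all_map /=.
have -> : psum (a :: w) 1 = bar a by rewrite psumS psum0 addr0.
rewrite -IH -andbA /A; congr (_ && (_ && _)).
  by apply: eq_all => i /=; rewrite psumS addrA.
by rewrite addrA.
Qed.

Lemma catalan_good w : catalanb w = good 0 w.
Proof.
rewrite -A_good add0r -psum_tot /catalanb /A.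
apply/andP/andP => -[H1 H2]; split => //.
  apply/allP => i; rewrite mem_iota => /andP[Hi1 Hi2].
  have [Hlt|Hge] := ltnP i (size w).
    by move/forallP: H1 => /(_ (Ordinal Hlt)) /implyP /(_ Hi1); rewrite add0r.
  have -> : i = size w by lia.
  by rewrite add0r (eqP H2).
apply/forallP => i; apply/implyP => Hi.
move/allP: H1 => /(_ i); rewrite mem_iota Hi /= add0r; apply.
by have := ltn_ord i; lia.
Qed.

Lemma DeltaE (m : int) n w :
  Delta q m n w = if (size w == 2 * n)%N then (if good 0 w then wt m 0 w else 0) else 0.
Proof.
rewrite /Delta catalan_good -(prod_wt m w 0).
case: (size w == 2 * n)%N => //=.
by case: (good 0 w) => //; apply: eq_bigr => i _; rewrite add0r.
Qed.

Variable M : nat.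

Lemma key w : forall h : int, 0 <= h -> h <= M%:Z ->
  (if good h w then wt (- M%:Z) h w else 0) =
  (if inb M h w && (h + tot w == 0) then wt (- M%:Z) h w else 0).
Proof.
elim: w => [|a w IH] h H0 H1 /=; first by rewrite addr0.
case: (boolP (0 <= h + bar a)) => Ha //=.
case: (boolP (h + bar a <= M%:Z)) => Hb /=.
  move: (IH _ Ha Hb); rewrite addrA.
  case: ifP => _; case: ifP => _ E //=; [by rewrite E mulr0 | by rewrite -E mulr0].
have [E1 E2] : a = true /\ h = M%:Z.
  by move: Ha Hb; case: a; rewrite /bar /=; lia.
rewrite E1 E2 stepE subrr qint0 mul0r; by case: ifP.
Qed.

Lemma tot_cat u v : tot (u ++ v) = tot u + tot v.
Proof. by elim: u => [|a u IH] /=; rewrite ?add0r // IH addrA. Qed.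

Lemma wt_cat (m : int) u v : forall h, wt m h (u ++ v) = wt m h u * wt m (h + tot u) v.
Proof.
elim: u => [|a u IH] h /=; first by rewrite mul1r addr0.
by rewrite IH mulrA addrA.
Qed.

Lemma inb_cat u v : forall h, inb M h (u ++ v) = inb M h u && inb M (h + tot u) v.
Proof.
elim: u => [|a u IH] h /=; first by rewrite addr0.
by rewrite IH addrA !andbA.
Qed.

Lemma tot_nseqx k : tot (nseq k true) = k%:Z.
Proof. elim: k => [|k IH] //=; rewrite IH /bar; lia. Qed.

Lemma tot_nseqy k : tot (nseq k false) = - k%:Z.
Proof. elim: k => [|k IH] //=; rewrite IH /bar; lia. Qed.

Lemma inb_nseqx k : forall h : int, 0 <= h -> h + k%:Z <= M%:Z -> inb M h (nseq k true).
Proof.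
elim: k => [|k IH] h H0 H1 //=; rewrite /bar.
apply/andP; split; first by apply/andP; split; lia.
apply: IH; lia.
Qed.

Lemma inb_nseqy k : forall h : int, k%:Z <= h -> h <= M%:Z -> inb M h (nseq k false).
Proof.
elim: k => [|k IH] h H0 H1 //=; rewrite /bar.
apply/andP; split; first by apply/andP; split; lia.
apply: IH; lia.
Qed.

Lemma tot_neg u : tot (map negb u) = - tot u.
Proof. elim: u => [|a u IH] /=; rewrite ?oppr0 // IH; case: a => /=; rewrite /bar; lia. Qed.

Lemma inb_neg u : forall h : int, inb M (M%:Z - h) (map negb u) = inb M h u.
Proof.
elim: u => [|a u IH] h //=.
have -> : M%:Z - h + bar (~~ a) = M%:Z - (h + bar a) by case: a; rewrite /bar /=; lia.
rewrite IH; congr (_ && _); case: a; rewrite /bar /=.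
  apply/andP/andP => -[]; split; lia.
apply/andP/andP => -[]; split; lia.
Qed.

Lemma wt_neg u : forall h : int,
  wt (- M%:Z) (M%:Z - h) (map negb u) = (-1) ^+ (size u) * wt (- M%:Z) h u.
Proof.
elim: u => [|a u IH] h /=; first by rewrite expr0 mulr1.
have -> : M%:Z - h + bar (~~ a) = M%:Z - (h + bar a) by case: a; rewrite /bar /=; lia.
rewrite IH !stepE exprS; case: a => /=.
  have -> : M%:Z - h = - (h + - M%:Z) by lia.
  rewrite qint_neg; ring.
have -> : M%:Z - h + - M%:Z = - h by lia.
rewrite qint_neg; ring.
Qed.

Lemma wt_x l : (l <= M)%N ->
  qfact q (M - l) * wt (- M%:Z) 0 (nseq l true) = (-1) ^+ l * qfact q M.
Proof.
elim: l => [|l IH] Hl; first by rewrite subn0 /= mulr1 expr0 mul1r.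
have -> : nseq l.+1 true = nseq l true ++ [:: true].
  by elim: (l) => //= k ->.
rewrite wt_cat tot_nseqx wt_cons stepE /= mulr1.
have -> : 0 + l%:Z + - M%:Z = - ((M - l.+1).+1 : nat)%:Z by lia.
rewrite qint_neg exprS -mulrA -IH; last by lia.
have -> : (M - l = (M - l.+1).+1)%N by lia.
rewrite qfactS; ring.
Qed.

Lemma wt_y k : wt (- M%:Z) k%:Z (nseq k false) = qfact q k.
Proof.
elim: k => [|k IH]; first by rewrite /= /qfact big_geq.
rewrite [nseq _ _]/= wt_cons stepE /=.
have -> : (k.+1)%:Z + bar false = k%:Z by rewrite /bar; lia.
by rewrite IH qfactS mulrC.
Qed.

Lemma lemP l r w : (l <= M)%N -> (r <= M)%N ->
  (if inb M 0 (nseq l true ++ w ++ nseq r false) &&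
      (0 + tot (nseq l true ++ w ++ nseq r false) == 0)
   then wt (- M%:Z) 0 (nseq l true ++ w ++ nseq r false) else 0) =
  (if inb M l%:Z w && (l%:Z + tot w == r%:Z)
   then wt (- M%:Z) 0 (nseq l true) * wt (- M%:Z) l%:Z w * qfact q r else 0).
Proof.
move=> Hl Hr.
rewrite !inb_cat !tot_cat !wt_cat tot_nseqx tot_nseqy !add0r inb_nseqx //.
all: try (by lia).
rewrite addrA subr_eq0 /=.
case: (boolP (l%:Z + tot w == r%:Z)) => E; last by rewrite !andbF.
rewrite (eqP E) inb_nseqy; try by lia.
by rewrite !andbT wt_y mulrA.
Qed.

Lemma lemQ l r w : (l <= M)%N -> (r <= M)%N ->
  (if inb M 0 (nseq (M - l) true ++ map negb w ++ nseq (M - r) false) &&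
      (0 + tot (nseq (M - l) true ++ map negb w ++ nseq (M - r) false) == 0)
   then wt (- M%:Z) 0 (nseq (M - l) true ++ map negb w ++ nseq (M - r) false) else 0) =
  (if inb M l%:Z w && (l%:Z + tot w == r%:Z)
   then wt (- M%:Z) 0 (nseq (M - l) true) * ((-1) ^+ size w * wt (- M%:Z) l%:Z w)
        * qfact q (M - r) else 0).
Proof.
move=> Hl Hr.
rewrite !inb_cat !tot_cat !wt_cat tot_nseqx tot_nseqy !add0r inb_nseqx //; try by lia.
have HM : ((M - l)%N)%:Z = M%:Z - l%:Z by lia.
rewrite HM inb_neg wt_neg tot_neg /=.
have -> : (M%:Z - l%:Z + (- tot w + - ((M - r)%N)%:Z) == 0) = (l%:Z + tot w == r%:Z).
  by apply/eqP/eqP; lia.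
case: (boolP (l%:Z + tot w == r%:Z)) => E; last by rewrite !andbF.
have -> : M%:Z - l%:Z + - tot w = ((M - r)%N)%:Z by move/eqP: E; lia.
rewrite inb_nseqy; try by lia.
by rewrite !andbT wt_y mulrA.
Qed.

End Aux.

Lemma delLkE (a : bool) k (F : fieldType) (v : V F) w : delLk a k v w = v (nseq k a ++ w).
Proof.
elim: k v w => [|k IH] v w; first by [].
by rewrite /delLk iterSr -/(delLk a k _) IH.
Qed.

Lemma delRkE (a : bool) k (F : fieldType) (v : V F) w : delRk a k v w = v (w ++ nseq k a).
Proof.
elim: k v w => [|k IH] v w; first by rewrite /= cats0.
rewrite /delRk iterSr -/(delRk a k _) IH /delR.
by rewrite -cats1 -catA; congr (v (_ ++ _)); elim: (k) => //= j ->.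
Qed.
Lemma sign2 (F : fieldType) (a k : nat) : (-1) ^+ (a + 2 * k) = (-1) ^+ a :> F.
Proof. by rewrite exprD exprM expr2 mulrNN mulr1 expr1n mulr1. Qed.

Theorem lemma6p5 (F : fieldType) (q : F)
  (hchar : [pchar F] =i pred0) (hq0 : q != 0)
  (hq : forall n : nat, (0 < n)%N -> q ^+ n != 1)
  (m l r : nat) (hl : (l <= m)%N) (hr : (r <= m)%N) :
  lser_scale (qfact q (m - l) * qfact q (m - r))
    (lser_of (ser_map (fun v => delLk letx l (delRk lety r v))
                      (ser_negt (DeltaS q (- (m%:Z)))))) =
  lser_scale (qfact q l * qfact q r)
    (lser_shift (l%:Z + r%:Z - m%:Z)
      (lser_of (ser_map (fun v => delLk lety (m - l) (delRk letx (m - r) v))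
                        (ser_negt (DeltatS q (- (m%:Z))))))).
Proof.
apply: functional_extensionality => N; apply: functional_extensionality => w.
rewrite /lser_scale /lser_shift.
case: N => [n|k]; case E: (_ - _) => [n'|k'];
  rewrite /lser_of /ser_map /ser_negt /DeltaS /DeltatS ?delLkE ?delRkE /Deltat ?DeltaE.
- rewrite -!catA !map_cat !map_nseq /letx /lety /=.
  rewrite !(key F q m _ 0) // lemP // lemQ //.
  have Hs : (size (nseq (m - l) true ++ [seq ~~ i | i <- w] ++ nseq (m - r) false) == 2 * n')%N = (size (nseq l true ++ w ++ nseq r false) == 2 * n)%N.
    by rewrite !size_cat !size_nseq size_map; apply/eqP/eqP; move: E; lia.
  rewrite Hs; case: eqP => Hsz; last by rewrite !mulr0.
  case: (_ && _); last by rewrite !mulr0.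
  set X1 := wt F q (-m%:Z) 0 (nseq l true).
  set X2 := wt F q (-m%:Z) 0 (nseq (m - l) true).
  set W := wt F q (-m%:Z) l w.
  have h1 := wt_x F q m l hl.
  have h2 := wt_x F q m (m - l) (leq_subr _ _); rewrite subKn // in h2.
  rewrite !size_cat !size_nseq in Hsz.
  rewrite [LHS](_ : _ = (-1)^+n * (qfact q (m-l) * X1) * (W * qfact q r * qfact q (m-r))); last by ring.
  rewrite [RHS](_ : _ = ((-1)^+n' * (-1)^+ size w) * (qfact q l * X2) * (W * qfact q r * qfact q (m-r))); last by ring.
  rewrite h1 h2.
  have Hsg : (-1)^+n' * (-1)^+size w * (-1)^+(m-l) = (-1)^+n * (-1)^+l :> F.
    rewrite -!exprD.
    have H2 : (n' + size w + (m - l) + 2 * (2 * l + r) = n + l + 2 * (n + m))%N by move: E; lia.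
    by rewrite -(sign2 F (n' + size w + (m - l)) (2 * l + r)) H2 sign2.
  rewrite [LHS](_ : _ = ((-1)^+n * (-1)^+l) * (qfact q m * (W * qfact q r * qfact q (m-r)))); last by ring.
  rewrite [RHS](_ : _ = ((-1)^+n' * (-1)^+size w * (-1)^+(m-l)) * (qfact q m * (W * qfact q r * qfact q (m-r)))); last by ring.
  by rewrite Hsg.
- have -> : (size ((nseq l letx ++ w) ++ nseq r lety) == 2 * n)%N = false.
    by apply/negbTE/eqP; rewrite !size_cat !size_nseq; move: E; rewrite NegzE; lia.
  by rewrite !mulr0.
- have -> : (size [seq ~~ i | i <- (nseq (m - l) lety ++ w) ++ nseq (m - r) letx] == 2 * n')%N = false.
    by apply/negbTE/eqP; rewrite size_map !size_cat !size_nseq; move: E; rewrite NegzE; lia.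
  by rewrite !mulr0.
- by rewrite !mulr0.
Qed.
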